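(* Let $M_1,M_2\in\mathcal{G}$ be such that $C_{M_1}$, $C_{M_2}$ and $C_{M_2^{-1}}$ are invertible. Then $$C_{M_1}^{-1}C_{M_1M_2}C_{M_2}^{-1}=\mathbb{1}-Z_{M_1}Z_{M_2^{-1}}.$$
   Context: Bosonic case: $\mathcal{G}=\mathrm{Sp}(2N,\mathbb{R})$, $J$ a complex structure compatible with the standard symplectic form ($J^2=-\mathbb{1}$, $J\Omega J^\intercal=\Omega$, $-J\Omega>0$). Fermionic case: $\mathcal{G}=\mathrm{SO}(2N,\mathbb{R})$, $J$ orthogonal with $J^2=-\mathbb{1}$. For $M\in\mathcal{G}$: $C_M=\frac12(M-JMJ)$, $D_M=\frac12(M+JMJ)$, $Z_M=C_M^{-1}D_M$. *)

(* Defs.v *)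
From HB Require Import structures.
From mathcomp Require Import all_boot all_order all_algebra.
From mathcomp Require Import reals.
Set Implicit Arguments. Unset Strict Implicit. Unset Printing Implicit Defensive.
Import Order.TTheory GRing.Theory Num.Theory.
Local Open Scope ring_scope.

Definition Omega (R : realType) (N : nat) : 'M[R]_(N + N) :=
  block_mx 0 1%:M (- 1%:M) 0.

Definition posdef (R : realType) (n : nat) (A : 'M[R]_n) : Prop :=
  A^T = A /\ forall x : 'cV[R]_n, x != 0 -> 0 < (x^T *m A *m x) 0 0.

Inductive case := Bosonic | Fermionic.

(* Membership in G: Sp(2N,R) in the bosonic case, SO(2N,R) in the fermionic case. *)
Definition in_group (R : realType) (N : nat) (c : case) (M : 'M[R]_(N + N)) : Prop :=
  match c with
  | Bosonic => M^T *m Omega R N *m M = Omega R N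
  | Fermionic => M^T *m M = 1%:M /\ \det M = 1
  end.

Definition compatible_J (R : realType) (N : nat) (c : case) (J : 'M[R]_(N + N)) : Prop :=
  match c with
  | Bosonic => J *m J = - 1%:M /\ J *m Omega R N *m J^T = Omega R N
               /\ posdef (- (J *m Omega R N))
  | Fermionic => J^T *m J = 1%:M /\ J *m J = - 1%:M
  end.

Definition Cmat (R : realType) (N : nat) (J M : 'M[R]_(N + N)) : 'M[R]_(N + N) :=
  2^-1 *: (M - J *m M *m J).
Definition Dmat (R : realType) (N : nat) (J M : 'M[R]_(N + N)) : 'M[R]_(N + N) :=
  2^-1 *: (M + J *m M *m J).
Definition Zmat (R : realType) (N : nat) (J M : 'M[R]_(N + N)) : 'M[R]_(N + N) :=
  invmx (Cmat J M) *m Dmat J M.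

(* Main.v *)
Require Import Defs.
From HB Require Import structures.
From mathcomp Require Import all_boot all_order all_algebra.
From mathcomp Require Import reals.
Import Order.TTheory GRing.Theory Num.Theory.
Local Open Scope ring_scope.

Lemma zid (V : zmodType) (a b c x : V) :
  (a - b - (c - - x)) + (a + b + (c + - x)) = (a - x) *+ 2.
Proof.
rewrite mulr2n opprK opprD !addrA.
rewrite -[_ + b + c]addrA -[a - b - c]addrA -opprD.
rewrite (addrAC _ a (b + c)) (addrAC (a - (b + c))) subrK.
done.
Qed.

Lemma zid2 (V : zmodType) (a b c x : V) :
  (a + b - (c + - x)) + (a - b + (c - - x)) = (a + x) *+ 2.
Proof.
rewrite mulr2n opprK opprD opprK !addrA.
rewrite -[a + b - c]addrA -[_ - b + c]addrA [-b + c]addrC -opprB.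
rewrite (addrAC (a - (c - b) + x) a) (addrAC (a - (c - b)) x) subrK.
done.
Qed.

Lemma half2 (R : realType) : (2^-1 : R) * 2^-1 * 2 = 2^-1.
Proof. by rewrite -mulrA mulVf ?mulr1 // pnatr_eq0. Qed.

Lemma JJe (R : realType) N (J A B : 'M[R]_(N + N)) : J *m J = - 1%:M ->
  J *m A *m J *m (J *m B *m J) = - (J *m (A *m B) *m J).
Proof.
move=> JJ.
rewrite !mulmxA -(mulmxA (J *m A) J J) JJ mulmxN mulmx1 mulNmx mulNmx.
by rewrite ?mulmxA.
Qed.

Lemma C_mul (R : realType) N (J A B : 'M[R]_(N + N)) : J *m J = - 1%:M ->
  Cmat J (A *m B) = Cmat J A *m Cmat J B + Dmat J A *m Dmat J B.
Proof.
move=> JJ.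
rewrite /Cmat /Dmat -!scalemxAl -!scalemxAr !scalerA -scalerDr.
rewrite mulmxBl !mulmxBr mulmxDl !mulmxDr JJe // zid -scaler_nat scalerA.
by rewrite half2.
Qed.

Lemma D_mul (R : realType) N (J A B : 'M[R]_(N + N)) : J *m J = - 1%:M ->
  Dmat J (A *m B) = Cmat J A *m Dmat J B + Dmat J A *m Cmat J B.
Proof.
move=> JJ.
rewrite /Cmat /Dmat -!scalemxAl -!scalemxAr !scalerA -scalerDr.
rewrite mulmxBl mulmxDl !mulmxBr !mulmxDr JJe // zid2 -scaler_nat scalerA.
by rewrite half2.
Qed.

Lemma D_one (R : realType) N (J : 'M[R]_(N + N)) : J *m J = - 1%:M ->
  Dmat J 1%:M = 0.
Proof. by move=> JJ; rewrite /Dmat mulmx1 JJ subrr scaler0. Qed.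

Lemma OmegaOmega (R : realType) N : Omega R N *m Omega R N = - 1%:M.
Proof.
rewrite /Omega mulmx_block !mul0mx !mulmx0 !add0r !addr0 mul1mx mulmx1.
have h : forall m, - (1%:M : 'M[R]_m) = (-1)%:M by move=> m; rewrite raddfN.
by rewrite !h scalar_mx_block.
Qed.

Theorem proposition1 (R : realType) (N : nat) (c : case) (J M1 M2 : 'M[R]_(N + N)) :
  compatible_J c J -> in_group c M1 -> in_group c M2 ->
  Cmat J M1 \in unitmx -> Cmat J M2 \in unitmx -> Cmat J (invmx M2) \in unitmx ->
  invmx (Cmat J M1) *m Cmat J (M1 *m M2) *m invmx (Cmat J M2)
  = 1%:M - Zmat J M1 *m Zmat J (invmx M2).
Proof.
move=> HJ _ HM2 u1 u2 u3.
have JJ : J *m J = - 1%:M by case: c HJ {HM2} => [[]|[]].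
have uM2 : M2 \in unitmx.
  case: c HJ HM2 => [_ H|_ [H _]]; last by case: (mulmx1_unit H).
  have : (- (Omega R N *m M2^T *m Omega R N)) *m M2 = 1%:M.
    by rewrite mulNmx -!mulmxA (mulmxA M2^T) H OmegaOmega opprK.
  by case/mulmx1_unit.
have E0 : Cmat J (invmx M2) *m Dmat J M2 + Dmat J (invmx M2) *m Cmat J M2 = 0.
  by rewrite -D_mul // mulVmx // D_one.
have e : Cmat J (invmx M2) *m Dmat J M2 = - (Dmat J (invmx M2) *m Cmat J M2).
  by apply/eqP; rewrite -addr_eq0 E0.
have k : Dmat J M2 *m invmx (Cmat J M2)
         = - (invmx (Cmat J (invmx M2)) *m Dmat J (invmx M2)).
  rewrite -[Dmat J M2](mulKmx u3) e mulmxN mulNmx -!mulmxA mulmxV // mulmx1.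
  by [].
rewrite C_mul // mulmxDr mulmxDl !mulmxA mulVmx // mul1mx mulmxV //.
rewrite -(mulmxA (invmx (Cmat J M1) *m Dmat J M1)) k mulmxN /Zmat.
by rewrite !mulmxA.
Qed.
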